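(* For each $C>0$ and $K>1$ there exists $D=D(K,C)>C$ with the following property. Let $\kappa$ be a $K$-contracting axis from $x$ to $x'$ and $\eta$ a $K$-contracting axis from $y'$ to $y$ in a geodesic metric space $X$, and suppose $\operatorname{diam}(x'\cup\pi_\kappa(\eta))<C$ and $\operatorname{diam}(y'\cup\pi_\eta(\kappa))<C$. Then for every $p\in X$, the inequalities $\operatorname{diam}(\pi_\eta(p)\cup y')\ge D$ and $\operatorname{diam}(\pi_\kappa(p)\cup x')\ge D$ cannot hold simultaneously. Moreover, $\operatorname{diam}(\pi_\eta(p)\cup y')\ge D$ implies $d(p,\kappa)\ge d(p,\eta)+K$.
   Context: $X$ is a geodesic metric space. For $A\subseteq X$ and $z\in X$, $\pi_A(z)=\{a\in A:d(z,a)=d(z,A)\}$, and $\pi_A(B)=\bigcup_{b\in B}\pi_A(b)$. A set $A$ is $K$-contracting if $\pi_A(z)\ne\emptyset$ for all $z$ and for $x,y$ with $d(x,y)\le d(x,A)-K$ one has $\operatorname{diam}(\pi_A(x)\cup\pi_A(y))\le K$. A $K$-quasigeodesic is a map $\gamma$ from an interval of $\mathbb R$ or a set of consecutive integers to $X$ with $|s-t|/K-K\le d(\gamma(s),\gamma(t))\le K|s-t|+K$; a $K$-contracting axis is a $K$-quasigeodesic whose image is $K$-contracting; ''from $a$ to $b$'' means initial point $a$ and terminal point $b$. Projections onto and distances to a path refer to its image. *)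

(* Defs.v *)
From HB Require Import structures.
From mathcomp Require Import all_boot all_order all_algebra.
From mathcomp Require Import all_classical all_reals.
From mathcomp Require Import ereal set_interval.
Set Implicit Arguments. Unset Strict Implicit. Unset Printing Implicit Defensive.
Import Order.TTheory GRing.Theory Num.Theory.
Local Open Scope classical_set_scope.
Local Open Scope ring_scope.

Section Defs.
Variables (R : realType) (X : Type) (d : X -> X -> R).

Definition is_metric : Prop :=
  (forall x y, 0 <= d x y) /\ (forall x y, d x y = 0 <-> x = y) /\
  (forall x y, d x y = d y x) /\ (forall x y z, d x z <= d x y + d y z).

Definition is_geodesic : Prop :=
  forall x y, exists g : R -> X, g 0 = x /\ g (d x y) = y /\
    forall s t, 0 <= s <= d x y -> 0 <= t <= d x y -> d (g s) (g t) = `|s - t|.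

Definition setdist (z : X) (A : set X) : R := inf [set d z a | a in A].

Definition cproj (A : set X) (z : X) : set X :=
  [set a | A a /\ d z a = setdist z A].

Definition projset (A B : set X) : set X := [set a | exists2 b, B b & cproj A b a].

Definition sdiam (S : set X) : \bar R :=
  ereal_sup [set r | exists a b, S a /\ S b /\ r = (d a b)%:E].

Definition contracting (K : R) (A : set X) : Prop :=
  (forall z, cproj A z !=set0) /\
  forall x y, d x y <= setdist x A - K ->
    (sdiam (cproj A x `|` cproj A y) <= K%:E)%E.

Definition int_dom (m n : int) : set R :=
  [set t | exists k : int, t = k%:~R /\ (m <= k <= n)%R].

Definition path_domain (I : set R) (a b : R) : Prop :=
  a <= b /\
  (I = `[a, b]%classic \/ exists m n : int, a = m%:~R /\ b = n%:~R /\ I = int_dom m n).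

Definition quasigeodesic (K : R) (I : set R) (g : R -> X) : Prop :=
  forall s t, I s -> I t ->
    `|s - t| / K - K <= d (g s) (g t) <= K * `|s - t| + K.

Definition contracting_axis (K : R) (I : set R) (g : R -> X) (x x' : X) : Prop :=
  exists a b, path_domain I a b /\ g a = x /\ g b = x' /\
    quasigeodesic K I g /\ contracting K (g @` I).

End Defs.

(* Main.v *)
Require Import Defs.
From HB Require Import structures.
From mathcomp Require Import all_boot all_order all_algebra.
From mathcomp Require Import all_classical all_reals.
From mathcomp Require Import ereal set_interval.
From mathcomp Require Import lra.
Import Order.TTheory GRing.Theory Num.Theory.
Local Open Scope classical_set_scope.
Local Open Scope ring_scope.
Set Implicit Arguments.
Section S.
Variables (R : realType) (X : Type) (d : X -> X -> R).
Hypothesis dm : is_metric d.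

Lemma d_ge0 x y : 0 <= d x y. Proof. by case: dm. Qed.
Lemma d_sym x y : d x y = d y x. Proof. by case: dm => _ [_ []]. Qed.
Lemma d_tri x y z : d x z <= d x y + d y z. Proof. by case: dm => _ [_ []]. Qed.

Lemma setdist_le z (A : set X) a : A a -> setdist d z A <= d z a.
Proof.
move=> Aa; apply: ge_inf; last by exists a.
by exists 0 => _ [b _ <-]; exact: d_ge0.
Qed.

Lemma sdiam_ge (S : set X) a b : S a -> S b -> ((d a b)%:E <= sdiam d S)%E.
Proof. move=> Sa Sb; apply: ereal_sup_ubound; by exists a, b. Qed.

Lemma sdiam_le (S : set X) M : (forall a b, S a -> S b -> d a b <= M) -> (sdiam d S <= M%:E)%E.
Proof.
move=> H; apply: ge_ereal_sup => _ [a [b [Sa [Sb ->]]]].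
by rewrite lee_fin; apply: H.
Qed.

Lemma d_xx x : d x x = 0. Proof. by case: dm => _ [H _]; apply/H. Qed.

Variable K : R.
Hypothesis K0 : 0 < K.
Hypothesis geo : is_geodesic d.

Lemma contr_pt (A : set X) x y a c : contracting d K A ->
  d x y <= setdist d x A - K -> cproj d A x a -> cproj d A y c -> d a c <= K.
Proof.
move=> [_ H] hxy ha hc.
rewrite -lee_fin; apply: le_trans (H x y hxy).
by apply: sdiam_ge; [left|right].
Qed.

Lemma bound11 (A : set X) p q a b : contracting d K A ->
  d p q < setdist d p A + K -> cproj d A p a -> cproj d A q b -> d a b <= 11 * K.
Proof.
move=> cA hl [Aa ra] [Ab sb]; have k0 := K0.
have [r rE] : exists r, setdist d p A = r by eexists.
have [s sE] : exists s, setdist d q A = s by eexists.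
rewrite rE in hl ra; rewrite sE in sb.
have s_qa : s <= d q a by rewrite -sE; apply: setdist_le.
have t1 := d_tri a p q; have t2 := d_tri a q b; have t3 := d_tri q p a.
rewrite (d_sym a p) ra in t1; rewrite (d_sym q p) ra in t3.
have h0 := d_ge0 p q.
case: (leP (d p q) (r - K)) => hA.
  have hh : d a b <= K.
    by apply: (contr_pt cA _ (conj Aa (etrans ra (esym rE))) (conj Ab (etrans sb (esym sE)))); rewrite rE.
  lra.
case: (ltP r K) => hB; first lra.
have [g [g0 [g1 gi]]] := geo p q.
have dpz : d p (g (r - K)) = r - K.
  rewrite -{1}g0 gi; last 2 first.
  - by rewrite lexx /=; apply: d_ge0.
  - apply/andP; split; lra.
  rewrite sub0r normrN ger0_norm //; lra.
have dzq : d (g (r - K)) q = d p q - r + K.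
  rewrite -{1}g1 gi; last 2 first.
  - apply/andP; split; lra.
  - by rewrite lexx andbT; apply: d_ge0.
  rewrite ler0_norm; lra.
move: dpz dzq; set z := g (r - K) => dpz dzq.
case: cA => cne Hc.
have [c cc] := cne z.
have hac : d a c <= K.
  apply: (contr_pt (conj cne Hc) _ (conj Aa (etrans ra (esym rE))) cc); rewrite dpz rE; lra.
have t4 := d_tri a c b.
case: (leP (3 * K) s) => hC.
  have hcb : d b c <= K.
    apply: (contr_pt (conj cne Hc) _ (conj Ab (etrans sb (esym sE))) cc).
    rewrite d_sym dzq sE; lra.
  rewrite (d_sym b c) in hcb; lra.
case: cc => Ac zc.
have zb : setdist d z A <= d z b by apply: setdist_le.
have t5 := d_tri c z b; have t6 := d_tri z q b.
rewrite (d_sym c z) zc in t5; rewrite sb in t6.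
lra.
Qed.

Lemma key (C : R) (A B : set X) y0 p : contracting d K A -> cproj d B p !=set0 ->
  (sdiam d ([set y0] `|` projset d A B) < C%:E)%E ->
  ((22 * K + 2 * C + 1)%:E <= sdiam d (cproj d A p `|` [set y0]))%E ->
  setdist d p A + K <= setdist d p B.
Proof.
move=> cA [q [Bq pq]] hC hD; have k0 := K0.
rewrite leNgt; apply/negP => hlt.
have [b bq] := cA.1 q.
have hby : d b y0 < C.
  rewrite -lte_fin; apply: le_lt_trans hC; apply: sdiam_ge; last by left.
  by right; exists q.
have far u : cproj d A p u -> d u y0 <= 11 * K + C.
  move=> hu; have := bound11 cA _ hu bq; rewrite pq => /(_ hlt) h.
  have := d_tri u b y0; lra.
have hle : (sdiam d (cproj d A p `|` [set y0]) <= (22 * K + 2 * C)%:E)%E.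
  have C0 : 0 <= C by have := d_ge0 b y0; lra.
  apply: sdiam_le => u v [hu|->] [hv|->].
  - have := far _ hu; have := far _ hv; have := d_tri u y0 v.
    rewrite (d_sym y0 v); lra.
  - have := far _ hu; lra.
  - have := far _ hv; rewrite d_sym; lra.
  - rewrite d_xx; lra.
have := le_trans hD hle; rewrite lee_fin; lra.
Qed.
End S.

Theorem lemma3p4 (R : realType) (C K : R) :
  0 < C -> 1 < K ->
  exists D : R, C < D /\
  forall (X : Type) (d : X -> X -> R),
    is_metric d -> is_geodesic d ->
  forall (kappa eta : R -> X) (Ik Ie : set R) (x x' y y' : X),
    contracting_axis d K Ik kappa x x' ->
    contracting_axis d K Ie eta y' y ->
    (sdiam d ([set x'] `|` projset d (kappa @` Ik) (eta @` Ie)) < C%:E)%E ->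
    (sdiam d ([set y'] `|` projset d (eta @` Ie) (kappa @` Ik)) < C%:E)%E ->
  forall p : X,
    ~ ((D%:E <= sdiam d (cproj d (eta @` Ie) p `|` [set y']))%E /\
       (D%:E <= sdiam d (cproj d (kappa @` Ik) p `|` [set x']))%E) /\
    ((D%:E <= sdiam d (cproj d (eta @` Ie) p `|` [set y']))%E ->
       setdist d p (eta @` Ie) + K <= setdist d p (kappa @` Ik)).
Proof.
move=> C0 K1; exists (22 * K + 2 * C + 1); split; first lra.
move=> X d dm geo kappa eta Ik Ie x x' y y' [a1 [b1 [_ [_ [_ [_ ck]]]]]]
  [a2 [b2 [_ [_ [_ [_ ce]]]]]] hx hy p.
have K0 : 0 < K by lra.
have k1 := @key _ _ _ dm _ K0 geo C _ _ _ _ ce (ck.1 p) hy.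
have k2 := @key _ _ _ dm _ K0 geo C _ _ _ _ ck (ce.1 p) hx.
split; last exact: k1.
case=> /k1 h1 /k2 h2; lra.
Qed.
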